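(* Consider the second-order Kuramoto model with bonding force $$\dot\theta_i=\omega_i,\qquad \dot\omega_i=\frac{1}{N}\sum_{j=1}^N\big[\kappa_0\cos(\theta_j-\theta_i)+\kappa_1\big](\omega_j-\omega_i)+\frac{\kappa_2}{N}\sum_{j=1}^N\big[|\theta_j-\theta_i|-\theta^\infty_{ij}\big]\operatorname{sgn}(\theta_j-\theta_i),\quad i\in[N].$$ Suppose $(\Theta^0,W^0)\in\mathcal{S}$, $\mathcal{E}(0)<\frac{\kappa_2(\min_{i\ne j}\theta^\infty_{ij})^2}{2N}$, $\kappa_0\cos\mathcal{U}+\kappa_1>0$, $\kappa_2>0$, and let $\{\theta_i\}$ be a global smooth solution. Then for $i\ne j$, $$\sup_{t\ge0}\Big|\frac{d}{dt}|\omega_j(t)-\omega_i(t)|^2\Big|<\infty,$$ and consequently the map $t\mapsto\sum_{i,j=1}^N|\omega_j(t)-\omega_i(t)|^2$ is uniformly continuous on $[0,\infty)$.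
   Context: $N\ge2$, $\kappa_0,\kappa_1\ge0$; $[\theta^\infty_{ij}]$ real symmetric with zero diagonal; $\operatorname{sgn}$ the sign function. $\mathcal{E}:=\frac12\sum_i|\omega_i|^2+\frac{\kappa_2}{4N}\sum_{i,j}(|\theta_j-\theta_i|-\theta^\infty_{ij})^2$; $\mathcal{U}:=\max_{i\ne j}\theta^\infty_{ij}+\sqrt{2N\mathcal{E}(0)/\kappa_2}$; $\mathcal{S}:=\{(\Theta,W)\in\mathbb{R}^{2N}:|\theta_i-\theta_j|<\mathcal{U}<\pi\ \forall i,j\}$. *)

(* Defs.v *)
From Stdlib Require Import Reals Lra.
From Coquelicot Require Import Coquelicot.
Open Scope R_scope.

Fixpoint sumN (n : nat) (f : nat -> R) : R :=
  match n with
  | O => 0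
  | S k => sumN k f + f k
  end.

Definition sgn (x : R) : R :=
  if Rlt_dec 0 x then 1 else if Rlt_dec x 0 then -1 else 0.

Fixpoint fold_row (op : R -> R -> R) (i : nat) (m : nat) (a : nat -> nat -> R)
  (acc : R) : R :=
  match m with
  | O => acc
  | S k => let acc' := fold_row op i k a acc in
           if Nat.eq_dec i k then acc' else op acc' (a i k)
  end.

Fixpoint fold_pairs (op : R -> R -> R) (n N : nat) (a : nat -> nat -> R)
  (acc : R) : R :=
  match n with
  | O => acc
  | S k => fold_row op k N a (fold_pairs op k N a acc)
  end.

(* max_{i <> j} a i j and min_{i <> j} a i j, for N >= 2 (initial value a 0 1
   is itself an off-diagonal entry) *)
Definition offdiag_max (N : nat) (a : nat -> nat -> R) : R :=
  fold_pairs Rmax N N a (a 0%nat 1%nat).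
Definition offdiag_min (N : nat) (a : nat -> nat -> R) : R :=
  fold_pairs Rmin N N a (a 0%nat 1%nat).

Definition energy (N : nat) (k2 : R) (thinf : nat -> nat -> R)
  (theta omega : nat -> R -> R) (t : R) : R :=
  / 2 * sumN N (fun i => (omega i t) ^ 2)
  + k2 / (4 * INR N) *
    sumN N (fun i => sumN N (fun j =>
       (Rabs (theta j t - theta i t) - thinf i j) ^ 2)).

Definition Ubound (N : nat) (k2 : R) (thinf : nat -> nat -> R)
  (theta omega : nat -> R -> R) : R :=
  offdiag_max N thinf + sqrt (2 * INR N * energy N k2 thinf theta omega 0 / k2).

Definition kuramoto_rhs (N : nat) (k0 k1 k2 : R) (thinf : nat -> nat -> R)
  (theta omega : nat -> R -> R) (i : nat) (t : R) : R :=
  / INR N * sumN N (fun j =>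
     (k0 * cos (theta j t - theta i t) + k1) * (omega j t - omega i t))
  + k2 / INR N * sumN N (fun j =>
     (Rabs (theta j t - theta i t) - thinf i j) * sgn (theta j t - theta i t)).

(* Main.v *)
Require Import Defs.
From Stdlib Require Import Reals Lra Lia Classical.
From Coquelicot Require Import Coquelicot.
Open Scope R_scope.


Lemma der_eq (f : R -> R) (x a b : R) : is_derive f x a -> a = b -> is_derive f x b.
Proof. intros H ->; exact H. Qed.

Lemma der_plus (f g : R -> R) x a b : is_derive f x a -> is_derive g x b ->
  is_derive (fun s => f s + g s) x (a + b).
Proof. intros; apply (is_derive_plus f g x a b); auto. Qed.

Lemma der_minus (f g : R -> R) x a b : is_derive f x a -> is_derive g x b ->
  is_derive (fun s => f s - g s) x (a - b).
Proof. intros; apply (is_derive_minus f g x a b); auto. Qed.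

Lemma der_mult (f g : R -> R) x a b : is_derive f x a -> is_derive g x b ->
  is_derive (fun s => f s * g s) x (a * g x + f x * b).
Proof. intros; apply (is_derive_mult f g x a b); auto. intros; apply Rmult_comm. Qed.

Lemma der_scal (f : R -> R) x k a : is_derive f x a -> is_derive (fun s => k * f s) x (k * a).
Proof. apply is_derive_scal. Qed.

Lemma der_const (c x : R) : is_derive (fun _ => c) x 0.
Proof. apply (is_derive_const c x). Qed.

Lemma der_sq (f : R -> R) x a : is_derive f x a -> is_derive (fun s => (f s) ^ 2) x (2 * f x * a).
Proof. intros H. eapply der_eq. apply (is_derive_pow f 2 x a H). simpl. ring. Qed.

Lemma der_abs (f : R -> R) x a : is_derive f x a -> f x <> 0 ->
  is_derive (fun s => Rabs (f s)) x (sgn (f x) * a).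
Proof. intros H Hn. eapply der_eq. apply (is_derive_Rabs f x a H Hn).
  f_equal. unfold sgn. destruct (Rlt_dec 0 (f x)).
  apply sign_eq_1; auto. destruct (Rlt_dec (f x) 0). apply sign_eq_m1; auto. lra. Qed.

Lemma der_sumN n (F : nat -> R -> R) dF x :
  (forall k, (k < n)%nat -> is_derive (F k) x (dF k)) ->
  is_derive (fun s => sumN n (fun k => F k s)) x (sumN n dF).
Proof. induction n; intros H; simpl.
  apply der_const.
  apply der_plus. apply IHn. intros; apply H; lia. apply H; lia. Qed.

Lemma der_cont (f : R -> R) x a : is_derive f x a -> continuity_pt f x.
Proof. intros H. apply continuity_pt_filterlim. apply (ex_derive_continuous f x).
  exists a; exact H. Qed.

Lemma cont_pos (f : R -> R) x : continuity_pt f x -> 0 < f x -> locally x (fun y => 0 < f y).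
Proof. intros H Hp. apply continuity_pt_locally with (eps := mkposreal _ Hp) in H.
  eapply filter_imp; [|exact H]. simpl. intros y Hy.
  apply Rabs_lt_between in Hy. lra. Qed.

Lemma locally_forall_lt n (P : nat -> R -> Prop) (x : R) :
  (forall k, (k < n)%nat -> locally x (P k)) ->
  locally x (fun y => forall k, (k < n)%nat -> P k y).
Proof. induction n; intros H.
  apply filter_forall. intros; lia.
  eapply filter_imp; [| apply filter_and; [apply IHn | apply (H n)]].
  intros y [H1 H2] k Hk. destruct (Nat.eq_dec k n) as [->|]. auto. apply H1; lia.
  intros; apply H; lia. lia. Qed.

Lemma locally_delta (x : R) (P : R -> Prop) : locally x P -> exists d, 0 < d /\ forall y, Rabs (y - x) < d -> P y.
Proof. intros [e He]. exists e. split. apply cond_pos. intros y Hy. apply He. exact Hy. Qed.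

Lemma sumN_ext n f g : (forall k, (k < n)%nat -> f k = g k) -> sumN n f = sumN n g.
Proof. induction n; intros H; simpl; auto. rewrite IHn, H; auto; intros; apply H; lia. Qed.

Lemma sumN_plus n f g : sumN n (fun k => f k + g k) = sumN n f + sumN n g.
Proof. induction n; simpl. ring. rewrite IHn; ring. Qed.

Lemma sumN_scal n c f : sumN n (fun k => c * f k) = c * sumN n f.
Proof. induction n; simpl. ring. rewrite IHn; ring. Qed.

Lemma sumN_swap n m (F : nat -> nat -> R) :
  sumN n (fun i => sumN m (fun j => F i j)) = sumN m (fun j => sumN n (fun i => F i j)).
Proof. induction n; simpl.
  induction m; simpl; auto. rewrite <- IHm; ring.
  rewrite IHn. rewrite <- sumN_plus. reflexivity. Qed.

Lemma sumN_le n f g : (forall k, (k < n)%nat -> f k <= g k) -> sumN n f <= sumN n g.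
Proof. induction n; intros H; simpl. lra. apply Rplus_le_compat. apply IHn; intros; apply H; lia. apply H; lia. Qed.

Lemma sumN_nonneg n f : (forall k, (k < n)%nat -> 0 <= f k) -> 0 <= sumN n f.
Proof. intros H. replace 0 with (sumN n (fun _ => 0)). apply sumN_le; auto.
  clear H; induction n; simpl; auto. rewrite IHn; ring. Qed.

Lemma sumN_abs n f : Rabs (sumN n f) <= sumN n (fun k => Rabs (f k)).
Proof. induction n; simpl. rewrite Rabs_R0; lra.
  eapply Rle_trans. apply Rabs_triang. lra. Qed.

Lemma sumN_term n f k : (forall k, (k < n)%nat -> 0 <= f k) -> (k < n)%nat -> f k <= sumN n f.
Proof. induction n; intros H Hk. lia. simpl. destruct (Nat.eq_dec k n) as [->|].
  assert (0 <= sumN n f) by (apply sumN_nonneg; intros; apply H; lia). lra.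
  assert (f k <= sumN n f) by (apply IHn; [intros; apply H; lia| lia]).
  assert (0 <= f n) by (apply H; lia). lra. Qed.

Lemma sumN_two n f i j : (forall k, (k < n)%nat -> 0 <= f k) -> (i < n)%nat -> (j < n)%nat -> i <> j ->
  f i + f j <= sumN n f.
Proof. induction n; intros H Hi Hj Hij. lia. simpl.
  assert (Hs : 0 <= sumN n f) by (apply sumN_nonneg; intros; apply H; lia).
  destruct (Nat.eq_dec i n) as [->|]; destruct (Nat.eq_dec j n) as [->|]; try lia.
  assert (f j <= sumN n f) by (apply sumN_term; [intros; apply H; lia| lia]). lra.
  assert (f i <= sumN n f) by (apply sumN_term; [intros; apply H; lia| lia]). lra.
  assert (f i + f j <= sumN n f) by (apply IHn; auto; try lia; intros; apply H; lia).
  assert (0 <= f n) by (apply H; lia). lra. Qed.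

Lemma cplus (f g : R -> R) x : continuity_pt f x -> continuity_pt g x -> continuity_pt (fun s => f s + g s) x.
Proof. intros. apply continuity_pt_ext with (f := (f + g)%F). reflexivity. apply continuity_pt_plus; auto. Qed.
Lemma cminus (f g : R -> R) x : continuity_pt f x -> continuity_pt g x -> continuity_pt (fun s => f s - g s) x.
Proof. intros. apply continuity_pt_ext with (f := (f - g)%F). reflexivity. apply continuity_pt_minus; auto. Qed.
Lemma cmult (f g : R -> R) x : continuity_pt f x -> continuity_pt g x -> continuity_pt (fun s => f s * g s) x.
Proof. intros. apply continuity_pt_ext with (f := (f * g)%F). reflexivity. apply continuity_pt_mult; auto. Qed.
Lemma cconst (c x : R) : continuity_pt (fun _ => c) x.
Proof. apply continuity_pt_const. intros a b; reflexivity. Qed.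
Lemma ccomp (h f : R -> R) x : continuity h -> continuity_pt f x -> continuity_pt (fun s => h (f s)) x.
Proof. intros Hh Hf. apply continuity_pt_ext with (f := comp h f). reflexivity.
  apply continuity_pt_comp; auto. Qed.
Lemma csq (f : R -> R) x : continuity_pt f x -> continuity_pt (fun s => f s ^ 2) x.
Proof. intros. apply continuity_pt_ext with (f := fun s => f s * (f s * 1)). intros; simpl; ring.
  apply cmult; auto. apply cmult; auto. apply cconst. Qed.
Lemma csumN n (F : nat -> R -> R) x : (forall k, (k < n)%nat -> continuity_pt (F k) x) ->
  continuity_pt (fun s => sumN n (fun k => F k s)) x.
Proof. induction n; intros H; simpl. apply cconst. apply cplus. apply IHn; intros; apply H; lia. apply H; lia. Qed.

Lemma cind (g : R -> R) (c : R) :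
 (forall t, 0 <= t -> continuity_pt g t) -> g 0 <= c ->
 (forall t, 0 <= t -> g t <= c -> exists d, 0 < d /\ forall s, t <= s <= t + d -> g s <= c) ->
 forall t, 0 <= t -> g t <= c.
Proof.
 intros Hc H0 Hl t1 Ht1. destruct (Rle_dec (g t1) c) as [|Hn]; auto. exfalso.
 set (E := fun x => (0 <= x <= t1) /\ forall v, 0 <= v <= x -> g v <= c).
 destruct (completeness E) as [t0 [Hub Hlub]].
 { exists t1; intros x [[_ Hx] _]; lra. }
 { exists 0; split; [lra| intros v Hv; replace v with 0 by lra; auto]. }
 assert (Ht0 : 0 <= t0).
 { apply Hub. split; [lra| intros v Hv; replace v with 0 by lra; auto]. }
 assert (Ht01 : t0 <= t1) by (apply Hlub; intros x Hx; destruct Hx; lra).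
 assert (Hbelow: forall v, 0 <= v < t0 -> g v <= c).
 { intros v Hv. destruct (classic (exists x, E x /\ v < x)) as [[x [[Hx1 Hx2] Hvx]]|Hno].
   apply Hx2; lra. exfalso.
   assert (t0 <= v).
   { apply Hlub; intros x Ex. destruct (Rle_dec x v); auto. exfalso; apply Hno; exists x; split; auto; lra. }
   lra. }
 assert (Hg0: g t0 <= c).
 { destruct (Req_dec t0 0) as [->|Hne]; auto.
   destruct (Rle_dec (g t0) c) as [|Hgt]; auto. exfalso.
   assert (He : 0 < g t0 - c) by lra.
   pose proof (proj1 (continuity_pt_locally g t0) (Hc t0 Ht0) (mkposreal _ He)) as Hloc.
   apply locally_delta in Hloc. destruct Hloc as [d [Hd Hdd]].
   set (v := t0 - Rmin d t0 / 2).
   assert (Hm1 : 0 < Rmin d t0) by (apply Rmin_pos; lra).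
   assert (Hm2 : Rmin d t0 <= d) by apply Rmin_l.
   assert (Hm3 : Rmin d t0 <= t0) by apply Rmin_r.
   assert (Hv : Rabs (v - t0) < d) by (unfold v; rewrite Rabs_left; lra).
   specialize (Hdd v Hv). simpl in Hdd. apply Rabs_lt_between in Hdd.
   assert (g v <= c) by (apply Hbelow; unfold v; lra). lra. }
 destruct (Hl t0 Ht0 Hg0) as [d [Hd Hs]].
 assert (Hneq : t0 < t1) by (destruct (Req_dec t0 t1) as [<-|]; [lra | lra]).
 assert (HE : E (Rmin (t0 + d) t1)).
 { split. split. apply Rmin_glb; lra. apply Rmin_r.
   intros v Hv. destruct (Rlt_dec v t0). apply Hbelow; lra. apply Hs.
   pose proof (Rmin_l (t0 + d) t1). lra. }
 apply Hub in HE. unfold Rmin in HE. destruct (Rle_dec (t0 + d) t1); lra.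
Qed.

Lemma row_max i m a acc : acc <= fold_row Rmax i m a acc /\
  forall k, (k < m)%nat -> k <> i -> a i k <= fold_row Rmax i m a acc.
Proof. induction m; simpl. split; [lra| intros; lia].
  destruct IHm as [H1 H2]. destruct (Nat.eq_dec i m).
  split; auto. intros k Hk Hki. apply H2; lia.
  split. eapply Rle_trans; [exact H1| apply Rmax_l].
  intros k Hk Hki. destruct (Nat.eq_dec k m) as [->|]. apply Rmax_r.
  eapply Rle_trans; [apply H2; lia| apply Rmax_l]. Qed.

Lemma pairs_max n N a acc : acc <= fold_pairs Rmax n N a acc /\
  forall i k, (i < n)%nat -> (k < N)%nat -> i <> k -> a i k <= fold_pairs Rmax n N a acc.
Proof. induction n; simpl. split; [lra| intros; lia].
  destruct IHn as [H1 H2]. destruct (row_max n N a (fold_pairs Rmax n N a acc)) as [H3 H4].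
  split. lra. intros i k Hi Hk Hik. destruct (Nat.eq_dec i n) as [->|].
  apply H4; auto. eapply Rle_trans; [apply H2; auto; lia| exact H3]. Qed.

Lemma row_min i m a acc : fold_row Rmin i m a acc <= acc /\
  (forall k, (k < m)%nat -> k <> i -> fold_row Rmin i m a acc <= a i k) /\
  (fold_row Rmin i m a acc = acc \/ exists k, (k < m)%nat /\ k <> i /\ fold_row Rmin i m a acc = a i k).
Proof. induction m; simpl. split; [lra| split; [intros; lia| auto]].
  destruct IHm as [H1 [H2 H3]]. destruct (Nat.eq_dec i m).
  split; auto. split. intros k Hk Hki. apply H2; lia.
  destruct H3 as [H3|[k [Hk [Hki Heq]]]]; [left; exact H3|]. right; exists k; split; [lia|split; auto].
  split. eapply Rle_trans; [apply Rmin_l| exact H1].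
  split. intros k Hk Hki. destruct (Nat.eq_dec k m) as [->|]. apply Rmin_r.
  eapply Rle_trans; [apply Rmin_l| apply H2; lia].
  unfold Rmin at 1 3. destruct (Rle_dec (fold_row Rmin i m a acc) (a i m)).
  destruct H3 as [H3|[k [Hk [Hki Heq]]]]; [left; exact H3|]. right; exists k; split; [lia|split; auto].
  right; exists m; split; [lia| split; auto]. Qed.

Lemma pairs_min n N a acc : fold_pairs Rmin n N a acc <= acc /\
  (forall i k, (i < n)%nat -> (k < N)%nat -> i <> k -> fold_pairs Rmin n N a acc <= a i k) /\
  (fold_pairs Rmin n N a acc = acc \/ exists i k, (i < n)%nat /\ (k < N)%nat /\ i <> k /\
      fold_pairs Rmin n N a acc = a i k).
Proof. induction n; simpl. split; [lra| split; [intros; lia| auto]].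
  destruct IHn as [H1 [H2 H3]].
  destruct (row_min n N a (fold_pairs Rmin n N a acc)) as [H4 [H5 H6]].
  split. lra. split. intros i k Hi Hk Hik. destruct (Nat.eq_dec i n) as [->|].
  apply H5; auto. eapply Rle_trans; [exact H4| apply H2; auto; lia].
  destruct H6 as [H6|[k [Hk [Hkn Heq]]]].
  rewrite H6. destruct H3 as [|[i [k [Hi [Hk [Hik Heq]]]]]]; auto.
  right; exists i, k; repeat split; auto; lia.
  right; exists n, k; repeat split; auto. Qed.

Lemma offmax_ge N a i k : (i < N)%nat -> (k < N)%nat -> i <> k -> a i k <= offdiag_max N a.
Proof. intros. apply pairs_max; auto. Qed.

Lemma offmin_le N a i k : (i < N)%nat -> (k < N)%nat -> i <> k -> offdiag_min N a <= a i k.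
Proof. intros. apply pairs_min; auto. Qed.

Lemma offmin_att N a : (2 <= N)%nat -> exists i k, (i < N)%nat /\ (k < N)%nat /\ i <> k /\ offdiag_min N a = a i k.
Proof. intros HN. destruct (pairs_min N N a (a 0%nat 1%nat)) as [_ [_ [H|H]]].
  exists 0%nat, 1%nat. unfold offdiag_min. repeat split; auto; lia. exact H. Qed.

Lemma sgn0 : sgn 0 = 0.
Proof. unfold sgn; destruct (Rlt_dec 0 0); [lra|]; destruct (Rlt_dec 0 0); lra. Qed.

Lemma sgn_opp x : sgn (- x) = - sgn x.
Proof. unfold sgn. destruct (Rlt_dec 0 (-x)); destruct (Rlt_dec 0 x); try lra;
  destruct (Rlt_dec x 0); try lra; destruct (Rlt_dec (-x) 0); lra. Qed.

Definition Edot N k0 k1 k2 thinf (theta omega : nat -> R -> R) t :=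
 / 2 * sumN N (fun i => 2 * omega i t * kuramoto_rhs N k0 k1 k2 thinf theta omega i t)
 + k2 / (4 * INR N) * sumN N (fun i => sumN N (fun j =>
     2 * (Rabs (theta j t - theta i t) - thinf i j) * (sgn (theta j t - theta i t) * (omega j t - omega i t)))).

Lemma E_der N k0 k1 k2 thinf (theta omega : nat -> R -> R) t :
  (forall i, (i < N)%nat -> is_derive (theta i) t (omega i t) /\
     is_derive (omega i) t (kuramoto_rhs N k0 k1 k2 thinf theta omega i t)) ->
  (forall i j, (i < N)%nat -> (j < N)%nat -> i <> j -> theta j t - theta i t <> 0) ->
  (forall i, (i < N)%nat -> thinf i i = 0) ->
  is_derive (energy N k2 thinf theta omega) t (Edot N k0 k1 k2 thinf theta omega t).
Proof.
  intros Hd Hnz Hdiag. unfold energy, Edot.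
  apply der_plus.
  - apply (der_scal (fun s => sumN N (fun i => omega i s ^ 2))).
    apply (der_sumN N (fun i s => omega i s ^ 2)).
    intros i Hi. apply (der_sq (omega i)). apply Hd; auto.
  - apply (der_scal (fun s => sumN N (fun i => sumN N (fun j => (Rabs (theta j s - theta i s) - thinf i j) ^ 2)))).
    apply (der_sumN N (fun i s => sumN N (fun j => (Rabs (theta j s - theta i s) - thinf i j) ^ 2))).
    intros i Hi. apply (der_sumN N (fun j s => (Rabs (theta j s - theta i s) - thinf i j) ^ 2)).
    intros j Hj. destruct (Nat.eq_dec i j) as [<-|Hij].
    + apply der_eq with 0.
      apply (is_derive_ext (fun _ : R => (Rabs 0 - thinf i i) ^ 2) (fun s : R => (Rabs (theta i s - theta i s) - thinf i i) ^ 2)).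
      intros s. replace (theta i s - theta i s) with 0 by ring. reflexivity.
      apply (der_const ((Rabs 0 - thinf i i) ^ 2)).
      replace (theta i t - theta i t) with 0 by ring. rewrite sgn0. ring.
    + apply der_eq with (2 * (Rabs (theta j t - theta i t) - thinf i j) * (sgn (theta j t - theta i t) * (omega j t - omega i t) - 0))%R.
      apply (der_sq (fun s => Rabs (theta j s - theta i s) - thinf i j)).
      apply (der_minus (fun s => Rabs (theta j s - theta i s)) (fun _ => thinf i j)).
      apply (der_abs (fun s => theta j s - theta i s)).
      apply (der_minus (theta j) (theta i)); apply Hd; auto. apply Hnz; auto. apply der_const.
      ring.
Qed.

Definition dsum n (F : nat -> nat -> R) := sumN n (fun i => sumN n (fun j => F i j)).

Lemma dsum_ext n F G : (forall i j, (i < n)%nat -> (j < n)%nat -> F i j = G i j) -> dsum n F = dsum n G.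
Proof. intros H. unfold dsum. apply sumN_ext. intros i Hi. apply sumN_ext. intros j Hj. auto. Qed.

Lemma dsum_plus n F G : dsum n (fun i j => F i j + G i j) = dsum n F + dsum n G.
Proof. unfold dsum. rewrite <- sumN_plus. apply sumN_ext. intros. apply sumN_plus. Qed.

Lemma dsum_scal n c F : dsum n (fun i j => c * F i j) = c * dsum n F.
Proof. unfold dsum. rewrite <- sumN_scal. apply sumN_ext. intros. apply sumN_scal. Qed.

Lemma dsum_swap n F : dsum n F = dsum n (fun i j => F j i).
Proof. unfold dsum. apply sumN_swap. Qed.

Lemma Edot_eq N k0 k1 k2 thinf (theta omega : nat -> R -> R) t :
  INR N <> 0 ->
  (forall i j, (i < N)%nat -> (j < N)%nat -> thinf i j = thinf j i) ->
  Edot N k0 k1 k2 thinf theta omega t =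
  - / (2 * INR N) * dsum N (fun i j => (k0 * cos (theta j t - theta i t) + k1) * (omega j t - omega i t) ^ 2).
Proof.
  intros HN Hsym.
  set (A := fun i j => (k0 * cos (theta j t - theta i t) + k1) * (omega j t - omega i t)).
  set (F := fun i j => (Rabs (theta j t - theta i t) - thinf i j) * sgn (theta j t - theta i t)).
  set (Q := dsum N (fun i j => (k0 * cos (theta j t - theta i t) + k1) * (omega j t - omega i t) ^ 2)).
  set (X := dsum N (fun i j => omega i t * A i j)).
  set (Y := dsum N (fun i j => omega i t * F i j)).
  set (P := dsum N (fun i j => F i j * (omega j t - omega i t))).
  assert (H1 : sumN N (fun i => 2 * omega i t * kuramoto_rhs N k0 k1 k2 thinf theta omega i t)
              = 2 / INR N * X + 2 * k2 / INR N * Y).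
  { unfold X, Y. rewrite <- !dsum_scal, <- dsum_plus. unfold dsum.
    apply sumN_ext. intros i Hi. rewrite sumN_plus, !sumN_scal. unfold kuramoto_rhs.
    unfold A, F. field. auto. }
  assert (H2 : sumN N (fun i => sumN N (fun j =>
     2 * (Rabs (theta j t - theta i t) - thinf i j) * (sgn (theta j t - theta i t) * (omega j t - omega i t))))
     = 2 * P).
  { unfold P. rewrite <- dsum_scal. apply dsum_ext. intros i j _ _. unfold F. ring. }
  assert (HX : X + X = -1 * Q).
  { assert (Hs : X = dsum N (fun i j => omega j t * A j i)) by (unfold X; apply dsum_swap).
    rewrite Hs at 2. unfold X, Q. rewrite <- dsum_plus, <- dsum_scal.
    apply dsum_ext. intros i j _ _. unfold A.
    replace (theta i t - theta j t) with (- (theta j t - theta i t)) by ring. rewrite cos_neg. ring. }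
  assert (HY : Y + Y = -1 * P).
  { assert (Hs : Y = dsum N (fun i j => omega j t * F j i)) by (unfold Y; apply dsum_swap).
    rewrite Hs at 2. unfold Y, P. rewrite <- dsum_plus, <- dsum_scal.
    apply dsum_ext. intros i j Hi Hj. unfold F.
    replace (theta i t - theta j t) with (- (theta j t - theta i t)) by ring.
    rewrite Rabs_Ropp, sgn_opp, (Hsym j i); auto. ring. }
  unfold Edot. rewrite H1, H2. fold Q.
  replace X with (- Q / 2) by lra. replace Y with (- P / 2) by lra. field. auto.
Qed.

Lemma sgn_bound x : Rabs (sgn x) <= 1.
Proof. unfold sgn. destruct (Rlt_dec 0 x). rewrite Rabs_R1; lra.
  destruct (Rlt_dec x 0). rewrite Rabs_left by lra; lra. rewrite Rabs_R0; lra. Qed.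

Lemma rhs_bound N k0 k1 k2 thinf (theta omega : nat -> R -> R) t B U i :
  0 < INR N -> 0 <= k0 -> 0 <= k1 -> 0 < k2 ->
  (forall j, (j < N)%nat -> Rabs (omega j t) <= B) ->
  (forall j, (j < N)%nat -> Rabs (theta j t - theta i t) <= U) -> (i < N)%nat ->
  Rabs (kuramoto_rhs N k0 k1 k2 thinf theta omega i t) <=
  / INR N * sumN N (fun _ => (k0 + k1) * (2 * B)) + k2 / INR N * sumN N (fun j => U + Rabs (thinf i j)).
Proof.
  intros HN Hk0 Hk1 Hk2 HB HU Hi. unfold kuramoto_rhs.
  eapply Rle_trans. apply Rabs_triang. apply Rplus_le_compat.
  - rewrite Rabs_mult, (Rabs_right (/ INR N)) by (apply Rle_ge, Rlt_le, Rinv_0_lt_compat; auto).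
    apply Rmult_le_compat_l. apply Rlt_le, Rinv_0_lt_compat; auto.
    eapply Rle_trans. apply sumN_abs. apply sumN_le. intros j Hj.
    rewrite Rabs_mult. apply Rmult_le_compat; try apply Rabs_pos.
    + pose proof (COS_bound (theta j t - theta i t)) as [Hc1 Hc2].
      apply Rabs_le. split; nra.
    + eapply Rle_trans. apply Rabs_triang. rewrite Rabs_Ropp.
      pose proof (HB j Hj); pose proof (HB i Hi); lra.
  - rewrite Rabs_mult, (Rabs_right (k2 / INR N)) by (apply Rle_ge, Rlt_le, Rdiv_lt_0_compat; auto).
    apply Rmult_le_compat_l. apply Rlt_le, Rdiv_lt_0_compat; auto.
    eapply Rle_trans. apply sumN_abs. apply sumN_le. intros j Hj.
    rewrite Rabs_mult. pose proof (sgn_bound (theta j t - theta i t)).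
    assert (Rabs (Rabs (theta j t - theta i t) - thinf i j) <= U + Rabs (thinf i j)).
    { eapply Rle_trans. apply Rabs_triang. rewrite Rabs_Ropp, Rabs_Rabsolu.
      pose proof (HU j Hj); lra. }
    pose proof (Rabs_pos (sgn (theta j t - theta i t))).
    pose proof (Rabs_pos (Rabs (theta j t - theta i t) - thinf i j)). nra.
Qed.

Lemma E_parts N k2 thinf (theta omega : nat -> R -> R) t :
  0 < k2 -> 0 < INR N ->
  (forall i j, (i < N)%nat -> (j < N)%nat -> thinf i j = thinf j i) ->
  (forall i, (i < N)%nat -> omega i t ^ 2 <= 2 * energy N k2 thinf theta omega t) /\
  (forall i j, (i < N)%nat -> (j < N)%nat -> i <> j ->
     (Rabs (theta j t - theta i t) - thinf i j) ^ 2 <= 2 * INR N * energy N k2 thinf theta omega t / k2).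
Proof.
  intros Hk2 HN Hsym. unfold energy.
  set (S := sumN N (fun i => omega i t ^ 2)).
  set (pot := sumN N (fun i => sumN N (fun j => (Rabs (theta j t - theta i t) - thinf i j) ^ 2))).
  pose (T := fun i j => (Rabs (theta j t - theta i t) - thinf i j) ^ 2).
  assert (HS : 0 <= S) by (apply sumN_nonneg; intros; apply pow2_ge_0).
  assert (Hrow : forall i, 0 <= sumN N (fun j => T i j)) by (intros; apply sumN_nonneg; intros; apply pow2_ge_0).
  assert (Hpot : 0 <= pot) by (apply sumN_nonneg; intros; apply (Hrow k)).
  assert (Hc : 0 < k2 / (4 * INR N)) by (apply Rdiv_lt_0_compat; lra).
  split.
  - intros i Hi. assert (omega i t ^ 2 <= S) by (apply (sumN_term N (fun i => omega i t ^ 2)); auto; intros; apply pow2_ge_0).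
    assert (0 <= k2 / (4 * INR N) * pot) by (apply Rmult_le_pos; lra). lra.
  - intros i j Hi Hj Hij. fold (T i j).
    assert (H1 : T i j <= sumN N (fun j' => T i j')) by (apply (sumN_term N (fun j' => T i j')); auto; intros; apply pow2_ge_0).
    assert (H2 : T j i <= sumN N (fun j' => T j j')) by (apply (sumN_term N (fun j' => T j j')); auto; intros; apply pow2_ge_0).
    assert (H3 : sumN N (fun j' => T i j') + sumN N (fun j' => T j j') <= pot)
      by (apply (sumN_two N (fun i => sumN N (fun j' => T i j'))); auto; intros; apply Hrow).
    assert (H4 : T j i = T i j).
    { unfold T. rewrite (Hsym j i) by auto. rewrite Rabs_minus_sym. reflexivity. }
    assert (H5 : 2 * T i j <= pot) by lra.
    assert (H6 : k2 / (4 * INR N) * (2 * T i j) <= k2 / (4 * INR N) * pot) by (apply Rmult_le_compat_l; lra).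
    apply Rmult_le_reg_l with (r := k2 / (2 * INR N)). apply Rdiv_lt_0_compat; lra.
    replace (k2 / (2 * INR N) * (2 * INR N * (/ 2 * S + k2 / (4 * INR N) * pot) / k2))
      with (/ 2 * S + k2 / (4 * INR N) * pot) by (field; lra).
    replace (k2 / (2 * INR N) * T i j) with (k2 / (4 * INR N) * (2 * T i j)) by (field; lra).
    lra.
Qed.

Lemma abs_le_sq x : Rabs x <= 1 + x ^ 2.
Proof. rewrite <- pow2_abs. pose proof (Rabs_pos x). nra. Qed.

Theorem lemma3p3 (N : nat) (k0 k1 k2 : R) (thinf : nat -> nat -> R)
  (theta omega : nat -> R -> R)
  (HN : (2 <= N)%nat) (Hk0 : 0 <= k0) (Hk1 : 0 <= k1) (Hk2 : 0 < k2)
  (Hsym : forall i j, (i < N)%nat -> (j < N)%nat -> thinf i j = thinf j i)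
  (Hdiag : forall i, (i < N)%nat -> thinf i i = 0)
  (* initial data in S *)
  (HS : (forall i j, (i < N)%nat -> (j < N)%nat ->
           Rabs (theta i 0 - theta j 0) < Ubound N k2 thinf theta omega)
        /\ Ubound N k2 thinf theta omega < PI)
  (HE0 : energy N k2 thinf theta omega 0
         < k2 * (offdiag_min N thinf) ^ 2 / (2 * INR N))
  (Hcoup : k0 * cos (Ubound N k2 thinf theta omega) + k1 > 0)
  (* global solution on [0, +oo) *)
  (Hsol : forall i t, (i < N)%nat -> 0 <= t ->
     is_derive (theta i) t (omega i t) /\
     is_derive (omega i) t (kuramoto_rhs N k0 k1 k2 thinf theta omega i t)) :
  (forall i j, (i < N)%nat -> (j < N)%nat -> i <> j ->
     exists M, forall t, 0 <= t ->
       Rabs (Derive (fun s => (omega j s - omega i s) ^ 2) t) <= M)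
  /\
  (forall eps, 0 < eps -> exists delta, 0 < delta /\
     forall s t, 0 <= s -> 0 <= t -> Rabs (s - t) < delta ->
       Rabs (sumN N (fun i => sumN N (fun j => (omega j s - omega i s) ^ 2))
           - sumN N (fun i => sumN N (fun j => (omega j t - omega i t) ^ 2)))
       < eps).
Proof.
  destruct HS as [HS HUpi].
  set (E0 := energy N k2 thinf theta omega 0) in *.
  set (U := Ubound N k2 thinf theta omega) in *.
  assert (HUdef : U = offdiag_max N thinf + sqrt (2 * INR N * E0 / k2)) by reflexivity.
  assert (HNpos : 0 < INR N) by (apply lt_0_INR; lia).
  assert (HU0 : 0 < U).
  { pose proof (HS 0%nat 0%nat ltac:(lia) ltac:(lia)) as H. rewrite Rminus_diag_eq in H by reflexivity.
    rewrite Rabs_R0 in H. exact H. }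
  assert (HE0nn : 0 <= E0).
  { destruct (E_parts N k2 thinf theta omega 0 Hk2 HNpos Hsym) as [Hw _].
    pose proof (Hw 0%nat ltac:(lia)). pose proof (pow2_ge_0 (omega 0%nat 0)). fold E0 in H. lra. }
  set (m := offdiag_min N thinf) in *.
  set (W := 2 * INR N * E0 / k2) in *.
  assert (HW : W < m ^ 2).
  { unfold W. apply Rmult_lt_reg_l with (r := k2 / (2 * INR N)). apply Rdiv_lt_0_compat; lra.
    replace (k2 / (2 * INR N) * (2 * INR N * E0 / k2)) with E0 by (field; lra).
    replace (k2 / (2 * INR N) * m ^ 2) with (k2 * m ^ 2 / (2 * INR N)) by (field; lra). exact HE0. }
  assert (Hm : 0 < m).
  { destruct (offmin_att N thinf HN) as [i [k [Hi [Hk [Hik Heq]]]]]. fold m in Heq.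
    destruct (E_parts N k2 thinf theta omega 0 Hk2 HNpos Hsym) as [_ Hp].
    specialize (Hp i k Hi Hk Hik). fold E0 W in Hp. rewrite <- Heq in Hp.
    destruct (Rle_dec m 0) as [Hle|Hgt]; [|lra]. exfalso.
    pose proof (Rabs_pos (theta k 0 - theta i 0)). nra. }
  assert (Hcons : forall t, 0 <= t -> energy N k2 thinf theta omega t <= E0 ->
     (forall i j, (i < N)%nat -> (j < N)%nat -> i <> j ->
        theta j t - theta i t <> 0 /\ Rabs (theta j t - theta i t) <= U) /\
     (forall i, (i < N)%nat -> Rabs (omega i t) <= 1 + 2 * E0)).
  { intros t Ht HEt. destruct (E_parts N k2 thinf theta omega t Hk2 HNpos Hsym) as [Hw Hp].
    split.
    - intros i j Hi Hj Hij. specialize (Hp i j Hi Hj Hij).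
      assert (Hp' : (Rabs (theta j t - theta i t) - thinf i j) ^ 2 <= W).
      { eapply Rle_trans. exact Hp. unfold W. unfold Rdiv. apply Rmult_le_compat_r.
        apply Rlt_le, Rinv_0_lt_compat; lra. apply Rmult_le_compat_l; lra. }
      assert (Hmt : m <= thinf i j) by (apply offmin_le; auto).
      split.
      + intros H0. rewrite H0, Rabs_R0 in Hp'. nra.
      + assert (Hsq : Rabs (Rabs (theta j t - theta i t) - thinf i j) <= sqrt W).
        { rewrite <- (sqrt_pow2 (Rabs _)) by apply Rabs_pos. apply sqrt_le_1_alt.
          rewrite pow2_abs. exact Hp'. }
        pose proof (Rle_abs (Rabs (theta j t - theta i t) - thinf i j)).
        pose proof (offmax_ge N thinf i j Hi Hj Hij). rewrite HUdef. fold W. lra.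
    - intros i Hi. pose proof (Hw i Hi). pose proof (abs_le_sq (omega i t)). lra. }
  assert (Hcosb : forall x, Rabs x <= U -> k0 * cos U + k1 <= k0 * cos x + k1).
  { intros x Hx. assert (Hc : cos U <= cos x).
    { assert (Hcx : cos x = cos (Rabs x)).
      { destruct (Rle_dec 0 x). rewrite Rabs_right by lra; reflexivity.
        rewrite Rabs_left by lra. rewrite cos_neg; reflexivity. }
      rewrite Hcx. destruct (Req_dec (Rabs x) U) as [->|Hne]. lra.
      apply Rlt_le, cos_decreasing_1; try lra. apply Rabs_pos. }
    nra. }
  assert (Hth : forall i t, (i < N)%nat -> 0 <= t -> continuity_pt (theta i) t).
  { intros i t Hi Ht. apply der_cont with (omega i t). apply Hsol; auto. }
  assert (How : forall i t, (i < N)%nat -> 0 <= t -> continuity_pt (omega i) t).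
  { intros i t Hi Ht. apply der_cont with (kuramoto_rhs N k0 k1 k2 thinf theta omega i t). apply Hsol; auto. }
  assert (Hcont : forall t, 0 <= t -> continuity_pt (energy N k2 thinf theta omega) t).
  { intros t Ht. unfold energy.
    apply (cplus (fun s => / 2 * sumN N (fun i => omega i s ^ 2))
                 (fun s => k2 / (4 * INR N) * sumN N (fun i => sumN N (fun j => (Rabs (theta j s - theta i s) - thinf i j) ^ 2)))).
    - apply (cmult (fun _ => / 2) (fun s => sumN N (fun i => omega i s ^ 2))). apply cconst.
      apply (csumN N (fun i s => omega i s ^ 2)). intros i Hi. apply (csq (omega i)). auto.
    - apply (cmult (fun _ => k2 / (4 * INR N)) (fun s => sumN N (fun i => sumN N (fun j => (Rabs (theta j s - theta i s) - thinf i j) ^ 2)))). apply cconst.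
      apply (csumN N (fun i s => sumN N (fun j => (Rabs (theta j s - theta i s) - thinf i j) ^ 2))). intros i Hi.
      apply (csumN N (fun j s => (Rabs (theta j s - theta i s) - thinf i j) ^ 2)). intros j Hj.
      apply (csq (fun s => Rabs (theta j s - theta i s) - thinf i j)).
      apply (cminus (fun s => Rabs (theta j s - theta i s)) (fun _ => thinf i j)); [|apply cconst].
      apply (ccomp Rabs (fun s => theta j s - theta i s)). exact Rcontinuity_abs.
      apply (cminus (theta j) (theta i)); auto. }
  assert (Hmono : forall t, 0 <= t -> energy N k2 thinf theta omega t <= E0).
  { apply (cind (energy N k2 thinf theta omega) E0 Hcont (Rle_refl _)).
    intros t0 Ht0 HEt0. destruct (Hcons t0 Ht0 HEt0) as [Hpair _].
    assert (Hloc : locally t0 (fun y => forall i, (i < N)%nat -> forall j, (j < N)%nat -> i <> j ->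
        0 < (theta j y - theta i y) * (theta j t0 - theta i t0) /\ 0 < k0 * cos (theta j y - theta i y) + k1)).
    { apply (locally_forall_lt N (fun i y => forall j, (j < N)%nat -> i <> j ->
        0 < (theta j y - theta i y) * (theta j t0 - theta i t0) /\ 0 < k0 * cos (theta j y - theta i y) + k1)).
      intros i Hi.
      apply (locally_forall_lt N (fun j y => i <> j ->
        0 < (theta j y - theta i y) * (theta j t0 - theta i t0) /\ 0 < k0 * cos (theta j y - theta i y) + k1)).
      intros j Hj. destruct (Nat.eq_dec i j) as [Heq|Hij].
      - apply filter_forall. intros y Hne; contradiction.
      - destruct (Hpair i j Hi Hj Hij) as [Hnz Hle].
        eapply filter_imp; [| apply filter_and;
          [apply (cont_pos (fun y => (theta j y - theta i y) * (theta j t0 - theta i t0)) t0)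
          |apply (cont_pos (fun y => k0 * cos (theta j y - theta i y) + k1) t0)]].
        + intros y [H1 H2] _; auto.
        + apply (cmult (fun y => theta j y - theta i y) (fun _ => theta j t0 - theta i t0)).
          apply (cminus (theta j) (theta i)); auto. apply cconst.
        + apply (Rsqr_pos_lt _ Hnz).
        + apply (cplus (fun y => k0 * cos (theta j y - theta i y)) (fun _ => k1)); [|apply cconst].
          apply (cmult (fun _ => k0) (fun y => cos (theta j y - theta i y))). apply cconst.
          apply (ccomp cos (fun y => theta j y - theta i y)). exact continuity_cos.
          apply (cminus (theta j) (theta i)); auto.
        + pose proof (Hcosb _ Hle). lra. }
    destruct (locally_delta _ _ Hloc) as [d [Hd Hdy]].
    exists (d / 2). split. lra. intros s [Hs1 Hs2].
    destruct (Req_dec s t0) as [->|Hne]. lra.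
    assert (Hder : forall x, t0 <= x <= s ->
       is_derive (energy N k2 thinf theta omega) x (Edot N k0 k1 k2 thinf theta omega x) /\
       Edot N k0 k1 k2 thinf theta omega x <= 0).
    { intros x Hx. assert (Hxy : Rabs (x - t0) < d) by (rewrite Rabs_right; lra).
      specialize (Hdy x Hxy). split.
      - apply E_der. intros i Hi; apply Hsol; auto; lra.
        intros i j Hi Hj Hij H0. destruct (Hdy i Hi j Hj Hij) as [H1 _]. rewrite H0 in H1. lra.
        exact Hdiag.
      - rewrite Edot_eq by (auto; lra).
        assert (0 <= dsum N (fun i j => (k0 * cos (theta j x - theta i x) + k1) * (omega j x - omega i x) ^ 2)).
        { unfold dsum. apply sumN_nonneg. intros i Hi. apply sumN_nonneg. intros j Hj.
          destruct (Nat.eq_dec i j) as [<-|Hij].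
          - replace (omega i x - omega i x) with 0 by ring. lra.
          - destruct (Hdy i Hi j Hj Hij) as [_ H2]. apply Rmult_le_pos. lra. apply pow2_ge_0. }
        assert (0 < / (2 * INR N)) by (apply Rinv_0_lt_compat; lra). nra. }
    pose proof (MVT_gen (energy N k2 thinf theta omega) t0 s (Edot N k0 k1 k2 thinf theta omega)) as HM.
    cbv zeta in HM. rewrite Rmin_left, Rmax_right in HM by lra.
    edestruct HM as [c [Hc Heq]].
    - intros x Hx. apply Hder; lra.
    - intros x Hx. apply der_cont with (Edot N k0 k1 k2 thinf theta omega x). apply Hder; lra.
    - destruct (Hder c Hc) as [_ Hneg]. assert (0 <= s - t0) by lra. nra. }
  set (Bw := 1 + 2 * E0).
  assert (Hb : forall t, 0 <= t -> (forall i j, (i < N)%nat -> (j < N)%nat -> Rabs (theta j t - theta i t) <= U)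
                                 /\ (forall i, (i < N)%nat -> Rabs (omega i t) <= Bw)).
  { intros t Ht. destruct (Hcons t Ht (Hmono t Ht)) as [H1 H2]. split; auto.
    intros i j Hi Hj. destruct (Nat.eq_dec i j) as [<-|Hij].
    rewrite Rminus_diag_eq, Rabs_R0 by reflexivity. lra. apply H1; auto. }
  set (Rb := fun i => / INR N * sumN N (fun _ => (k0 + k1) * (2 * Bw)) + k2 / INR N * sumN N (fun j => U + Rabs (thinf i j))).
  assert (Hr : forall t i, 0 <= t -> (i < N)%nat -> Rabs (kuramoto_rhs N k0 k1 k2 thinf theta omega i t) <= Rb i).
  { intros t i Ht Hi. destruct (Hb t Ht) as [H1 H2]. apply rhs_bound; auto. }
  assert (Hpd : forall t i j, 0 <= t -> (i < N)%nat -> (j < N)%nat ->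
     is_derive (fun s => (omega j s - omega i s) ^ 2) t
       (2 * (omega j t - omega i t) * (kuramoto_rhs N k0 k1 k2 thinf theta omega j t - kuramoto_rhs N k0 k1 k2 thinf theta omega i t))).
  { intros t i j Ht Hi Hj. apply (der_sq (fun s => omega j s - omega i s)).
    apply (der_minus (omega j) (omega i)); apply Hsol; auto. }
  assert (Hdb : forall t i j, 0 <= t -> (i < N)%nat -> (j < N)%nat ->
     Rabs (2 * (omega j t - omega i t) * (kuramoto_rhs N k0 k1 k2 thinf theta omega j t - kuramoto_rhs N k0 k1 k2 thinf theta omega i t))
     <= 2 * (2 * Bw) * (Rb j + Rb i)).
  { intros t i j Ht Hi Hj. destruct (Hb t Ht) as [_ H2].
    rewrite !Rabs_mult, Rabs_right by lra.
    assert (Ho : Rabs (omega j t - omega i t) <= 2 * Bw).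
    { eapply Rle_trans. apply Rabs_triang. rewrite Rabs_Ropp. pose proof (H2 i Hi); pose proof (H2 j Hj); lra. }
    assert (Hrr : Rabs (kuramoto_rhs N k0 k1 k2 thinf theta omega j t - kuramoto_rhs N k0 k1 k2 thinf theta omega i t) <= Rb j + Rb i).
    { eapply Rle_trans. apply Rabs_triang. rewrite Rabs_Ropp. pose proof (Hr t i Ht Hi); pose proof (Hr t j Ht Hj); lra. }
    pose proof (Rabs_pos (omega j t - omega i t)).
    pose proof (Rabs_pos (kuramoto_rhs N k0 k1 k2 thinf theta omega j t - kuramoto_rhs N k0 k1 k2 thinf theta omega i t)).
    nra. }
  split.
  - intros i j Hi Hj Hij. exists (2 * (2 * Bw) * (Rb j + Rb i)). intros t Ht.
    eapply Rle_trans; [right; apply f_equal; apply is_derive_unique; apply Hpd; auto | apply Hdb; auto].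
  - intros eps Heps.
    set (M2 := sumN N (fun i => sumN N (fun j => 2 * (2 * Bw) * (Rb j + Rb i)))).
    set (Sf := fun s => sumN N (fun i => sumN N (fun j => (omega j s - omega i s) ^ 2))).
    set (Sd := fun t => sumN N (fun i => sumN N (fun j =>
        2 * (omega j t - omega i t) * (kuramoto_rhs N k0 k1 k2 thinf theta omega j t - kuramoto_rhs N k0 k1 k2 thinf theta omega i t)))).
    assert (HSd : forall t, 0 <= t -> is_derive Sf t (Sd t) /\ Rabs (Sd t) <= M2).
    { intros t Ht. split.
      - apply (der_sumN N (fun i s => sumN N (fun j => (omega j s - omega i s) ^ 2))). intros i Hi.
        apply (der_sumN N (fun j s => (omega j s - omega i s) ^ 2)). intros j Hj. apply Hpd; auto.
      - eapply Rle_trans. apply sumN_abs. apply sumN_le. intros i Hi.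
        eapply Rle_trans. apply sumN_abs. apply sumN_le. intros j Hj. apply Hdb; auto. }
    assert (HM2 : 0 <= M2) by (pose proof (Rabs_pos (Sd 0)); pose proof (proj2 (HSd 0 (Rle_refl 0))); lra).
    assert (Hlip : forall x y, 0 <= y <= x -> Rabs (Sf y - Sf x) <= M2 * Rabs (y - x)).
    { intros x y Hxy. apply (bounded_variation Sf Sd M2 x y).
      intros z Hz. rewrite (Rabs_left1 (y - x)) in Hz by lra.
      assert (y <= z) by (apply Rabs_le_between in Hz; lra). apply HSd; lra. }
    exists (eps / (M2 + 1)). split. apply Rdiv_lt_0_compat; lra.
    intros s t Hs Ht Hst. change (Rabs (Sf s - Sf t) < eps).
    assert (Hl : Rabs (Sf s - Sf t) <= M2 * Rabs (s - t)).
    { destruct (Rle_dec s t). apply Hlip; lra.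
      rewrite Rabs_minus_sym, (Rabs_minus_sym s t). apply Hlip; lra. }
    assert (M2 * Rabs (s - t) <= M2 * (eps / (M2 + 1))) by (apply Rmult_le_compat_l; lra).
    assert (M2 * (eps / (M2 + 1)) = eps - eps / (M2 + 1)) by (field; lra).
    assert (0 < eps / (M2 + 1)) by (apply Rdiv_lt_0_compat; lra).
    lra.
Qed.
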